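(* Let $A\in\mathbb{R}^{m\times n}$ with $\lambda:=\lambda_{\max}(A^TA)>0$, $b\in\mathbb{R}^m$, and $D\subseteq\mathbb{R}^n$ a nonempty compact set. Given $x^0\in\mathbb{R}^n$ and $\gamma\in(0,\frac1{12\lambda})$, consider the iteration \[ y^{t+1}=[(5\gamma\lambda+1)I+\gamma A^TA]^{-1}(x^t+\gamma A^Tb),\quad z^{t+1}\in P_D\!\left(\frac{2y^{t+1}-x^t}{1-5\lambda\gamma}\right),\quad x^{t+1}=x^t+2(z^{t+1}-y^{t+1}). \] Then $\{(y^t,z^t,x^t)\}$ is bounded and every cluster point $(\bar y,\bar z,\bar x)$ satisfies $\bar y=\bar z$ and $0\in A^T(A\bar z-b)+\partial\delta_D(\bar z)$, i.e., $\bar z$ is a stationary point of $\min_{u\in D}\frac12\|Au-b\|^2$.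
   Context: $P_D(x)$ denotes the (possibly multivalued) set of points of $D$ nearest to $x$ (any element may be chosen); $\delta_D$ is the indicator function of $D$; $\partial\delta_D$ is the limiting subdifferential: $v\in\partial h(x)$ iff there exist $x^t\to x$ with $h(x^t)\to h(x)$ and $v^t\to v$ such that $\liminf_{z\to x^t, z\ne x^t}\frac{h(z)-h(x^t)-\langle v^t,z-x^t\rangle}{\|z-x^t\|}\ge0$ for each $t$. *)

(* Defs.v *)
From mathcomp Require Import all_boot.
From Stdlib Require Import Reals ClassicalEpsilon.

Set Implicit Arguments.
Unset Strict Implicit.

Local Open Scope R_scope.

Definition vec (n : nat) := 'I_n -> R.
Definition mat (m n : nat) := 'I_m -> 'I_n -> R.

Definition vzero {n} : vec n := fun _ => 0.
Definition vadd {n} (u v : vec n) : vec n := fun i => u i + v i.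
Definition vsub {n} (u v : vec n) : vec n := fun i => u i - v i.
Definition vscale {n} (a : R) (u : vec n) : vec n := fun i => a * u i.
Definition vopp {n} (u : vec n) : vec n := fun i => - u i.

Definition dot {n} (u v : vec n) : R := \big[Rplus/0]_(i < n) (u i * v i).
Definition norm {n} (u : vec n) : R := sqrt (dot u u).

Definition mv {m n} (A : mat m n) (x : vec n) : vec m :=
  fun i => \big[Rplus/0]_(j < n) (A i j * x j).
Definition tr {m n} (A : mat m n) : mat n m := fun j i => A i j.
Definition mm {m n p} (A : mat m n) (B : mat n p) : mat m p :=
  fun i k => \big[Rplus/0]_(j < n) (A i j * B j k).
Definition idm {n} : mat n n := fun i j => if i == j then 1 else 0.
Definition madd {m n} (A B : mat m n) : mat m n := fun i j => A i j + B i j.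
Definition mscale {m n} (a : R) (A : mat m n) : mat m n := fun i j => a * A i j.

Definition eigenvalue {n} (M : mat n n) (l : R) : Prop :=
  exists v : vec n, v <> vzero /\ mv M v = vscale l v.
Definition is_lambda_max {n} (M : mat n n) (l : R) : Prop :=
  eigenvalue M l /\ forall l', eigenvalue M l' -> l' <= l.

Definition open_set {n} (U : vec n -> Prop) : Prop :=
  forall x, U x -> exists r, 0 < r /\ forall y, norm (vsub y x) < r -> U y.
Definition compact_set {n} (D : vec n -> Prop) : Prop :=
  forall (I : Type) (U : I -> vec n -> Prop),
    (forall i, open_set (U i)) ->
    (forall x, D x -> exists i, U i x) ->
    exists l : list I, forall x, D x -> exists i, List.In i l /\ U i x.

Definition seq_conv {n} (s : nat -> vec n) (l : vec n) : Prop :=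
  forall eps, 0 < eps -> exists N, forall k, (N <= k)%nat -> norm (vsub (s k) l) < eps.
Definition seq_bounded {n} (s : nat -> vec n) : Prop :=
  exists M, forall t, norm (s t) <= M.

Definition proj_set {n} (D : vec n -> Prop) (x z : vec n) : Prop :=
  D z /\ forall u, D u -> norm (vsub x z) <= norm (vsub x u).

(* extended-real-valued functions: None stands for +infinity *)
Definition xfun (n : nat) := vec n -> option R.

Definition indicator {n} (D : vec n -> Prop) : xfun n :=
  fun x => if excluded_middle_informative (D x) then Some 0 else None.

(* Frechet (regular) subgradient: h finite at x and
   liminf_{z -> x, z <> x} (h z - h x - <v, z - x>)/||z - x|| >= 0 *)
Definition frechet_subgrad {n} (h : xfun n) (x v : vec n) : Prop :=
  exists hx, h x = Some hx /\
  forall eps, 0 < eps -> exists d, 0 < d /\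
    forall z, 0 < norm (vsub z x) < d ->
      match h z with
      | None => True
      | Some hz => hz - hx - dot v (vsub z x) >= - eps * norm (vsub z x)
      end.

Definition xval_conv {n} (h : xfun n) (s : nat -> vec n) (x : vec n) : Prop :=
  exists hx, h x = Some hx /\
  forall eps, 0 < eps -> exists N, forall k, (N <= k)%nat ->
    exists r, h (s k) = Some r /\ Rabs (r - hx) < eps.

Definition limiting_subgrad {n} (h : xfun n) (x v : vec n) : Prop :=
  exists (xs vs : nat -> vec n),
    seq_conv xs x /\ xval_conv h xs x /\ seq_conv vs v /\
    forall t, frechet_subgrad h (xs t) (vs t).

Definition cluster_point3 {n} (y z x : nat -> vec n) (yb zb xb : vec n) : Prop :=
  exists phi : nat -> nat, (forall k, (phi k < phi (S k))%nat) /\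
    seq_conv (fun k => y (phi k)) yb /\ seq_conv (fun k => z (phi k)) zb /\
    seq_conv (fun k => x (phi k)) xb.

(* Main.v *)
Require Import Defs.
From HB Require Import structures.
From mathcomp Require Import all_boot.
From Stdlib Require Import Reals Lra Psatz FunctionalExtensionality Classical ClassicalEpsilon List.
From mathcomp Require all_algebra Rstruct.
Local Open Scope R_scope.

HB.instance Definition _ := Monoid.isComLaw.Build R 0 Rplus (fun a b c => esym (Rplus_assoc a b c)) Rplus_comm Rplus_0_l.


Lemma sumR_add n (F G : 'I_n -> R) :
  \big[Rplus/0]_(i < n) (F i + G i) = \big[Rplus/0]_(i < n) F i + \big[Rplus/0]_(i < n) G i.
Proof. by rewrite big_split. Qed.

Lemma sumR_scale n a (F : 'I_n -> R) :
  a * \big[Rplus/0]_(i < n) F i = \big[Rplus/0]_(i < n) (a * F i).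
Proof. elim/big_rec2: _ => [|i x y _ <-]; ring. Qed.

Lemma sumR_ge0 n (F : 'I_n -> R) : (forall i, 0 <= F i) -> 0 <= \big[Rplus/0]_(i < n) F i.
Proof. move=> H; elim/big_ind: _ => //; [lra| move=> x y; lra]. Qed.

Lemma sumR_exch m n (F : 'I_m -> 'I_n -> R) :
  \big[Rplus/0]_(i < m) \big[Rplus/0]_(j < n) F i j = \big[Rplus/0]_(j < n) \big[Rplus/0]_(i < m) F i j.
Proof. exact: exchange_big. Qed.

Lemma sumR_ext n (F G : 'I_n -> R) : (forall i, F i = G i) ->
  \big[Rplus/0]_(i < n) F i = \big[Rplus/0]_(i < n) G i.
Proof. by move=> H; apply: eq_bigr => i _. Qed.

Lemma sumR_zero n : \big[Rplus/0]_(i < n) (0:R) = 0.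
Proof. by rewrite big1. Qed.

Lemma discr a b c : 0 <= a -> (forall t, 0 <= a*t*t + 2*b*t + c) -> b*b <= a*c.
Proof.
move=> Ha H.
destruct (Rle_lt_or_eq_dec 0 a Ha) as [Hp|H0].
- have := H (-b/a). move=> Ht.
  have E : a * (- b / a) * (- b / a) + 2 * b * (- b / a) + c = c - b*b/a by field; lra.
  rewrite E in Ht.
  have : b * b / a <= c by lra.
  move=> Hc. have : b*b <= c * a.
    by apply (Rmult_le_reg_r (/a)); [apply Rinv_0_lt_compat; lra| rewrite Rinv_r_simpl_l; [|lra]; exact Hc].
  lra.
- subst a. destruct (Req_dec b 0) as [->|Hb]; first lra.
  have := H (-(c+1)/(2*b)).
  have E : 0 * (- (c + 1) / (2 * b)) * (- (c + 1) / (2 * b)) + 2 * b * (- (c + 1) / (2 * b)) + c = -1 by field.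
  rewrite E; lra.
Qed.

Section Vec.
Context {n : nat}.
Implicit Types u v w : vec n.

Lemma vext u v : (forall i, u i = v i) -> u = v.
Proof. move=> H; exact: functional_extensionality. Qed.

Lemma dotC u v : dot u v = dot v u.
Proof. rewrite /dot; apply: sumR_ext => i; ring. Qed.
Lemma dotDl u v w : dot (vadd u v) w = dot u w + dot v w.
Proof. rewrite /dot -sumR_add; apply: sumR_ext => i; rewrite /vadd; ring. Qed.
Lemma dotDr u v w : dot w (vadd u v) = dot w u + dot w v.
Proof. rewrite /dot -sumR_add; apply: sumR_ext => i; rewrite /vadd; ring. Qed.
Lemma dotZl a u v : dot (vscale a u) v = a * dot u v.
Proof. rewrite /dot sumR_scale; apply: sumR_ext => i; rewrite /vscale; ring. Qed.
Lemma dotZr a u v : dot v (vscale a u) = a * dot v u.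
Proof. rewrite /dot sumR_scale; apply: sumR_ext => i; rewrite /vscale; ring. Qed.
Lemma dotNl u v : dot (vopp u) v = - dot u v.
Proof. have -> : vopp u = vscale (-1) u by apply: vext => i; rewrite /vopp /vscale; ring.
 rewrite dotZl; ring. Qed.
Lemma dotNr u v : dot v (vopp u) = - dot v u.
Proof. by rewrite dotC dotNl dotC. Qed.
Lemma dotBl u v w : dot (vsub u v) w = dot u w - dot v w.
Proof. have -> : vsub u v = vadd u (vopp v) by apply: vext => i; rewrite /vopp /vadd /vsub; ring.
 rewrite dotDl dotNl; ring. Qed.
Lemma dotBr u v w : dot w (vsub u v) = dot w u - dot w v.
Proof. by rewrite dotC dotBl !(dotC w). Qed.
Lemma dot0l v : dot vzero v = 0.
Proof. rewrite /dot big1 // => i _; rewrite /vzero; ring. Qed.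
Lemma dot0r v : dot v vzero = 0.
Proof. by rewrite dotC dot0l. Qed.

Lemma dot_ge0 u : 0 <= dot u u.
Proof. apply: sumR_ge0 => i; nra. Qed.

Lemma dot_eq0 u : dot u u = 0 -> u = vzero.
Proof.
move=> H; apply: vext => i; rewrite /vzero.
move: H; rewrite /dot (bigD1 i) //=.
have : 0 <= \big[Rplus/0]_(j < n | j != i) (u j * u j).
  by elim/big_ind: _ => //; [lra| move=> x y; lra| move=> j _; nra].
move=> H1 H2. set S := \big[Rplus/0]_(j < n | j != i) (u j * u j) in H1 H2. nra.
Qed.

Lemma CS u v : dot u v * dot u v <= dot u u * dot v v.
Proof.
rewrite (Rmult_comm (dot u u)).
apply: discr; first exact: dot_ge0.
move=> t; have := dot_ge0 (vadd u (vscale t v)).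
rewrite !dotDl !dotDr !dotZl !dotZr (dotC v u). lra.
Qed.

Lemma norm_ge0 u : 0 <= norm u.
Proof. exact: sqrt_pos. Qed.
Lemma norm_sq u : norm u * norm u = dot u u.
Proof. rewrite /norm sqrt_sqrt //; exact: dot_ge0. Qed.

Lemma CS_abs u v : Rabs (dot u v) <= norm u * norm v.
Proof.
have Hp : 0 <= norm u * norm v by apply: Rmult_le_pos; apply: norm_ge0.
rewrite -(Rabs_pos_eq _ Hp). apply: Rsqr_le_abs_0.
rewrite /Rsqr. have := CS u v. have := norm_sq u. have := norm_sq v. nra.
Qed.

Lemma CS_le u v : dot u v <= norm u * norm v.
Proof. have := CS_abs u v. have := Rle_abs (dot u v). lra. Qed.

Lemma norm_le_sq u v : dot u u <= dot v v -> norm u <= norm v.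
Proof. move=> H; apply: sqrt_le_1_alt; exact H. Qed.
Lemma sq_le_norm u v : norm u <= norm v -> dot u u <= dot v v.
Proof. move=> H; rewrite -!norm_sq; have := norm_ge0 u; nra. Qed.

Lemma norm_add u v : norm (vadd u v) <= norm u + norm v.
Proof.
have h1 := norm_ge0 u; have h2 := norm_ge0 v; have h3 := norm_ge0 (vadd u v).
have : dot (vadd u v) (vadd u v) <= (norm u + norm v) * (norm u + norm v).
  rewrite dotDl !dotDr (dotC v u). have := CS_le u v. rewrite -!norm_sq. nra.
rewrite -norm_sq. nra.
Qed.

Lemma norm_sub_tri u v w : norm (vsub u w) <= norm (vsub u v) + norm (vsub v w).
Proof.
have -> : vsub u w = vadd (vsub u v) (vsub v w) by apply: vext => i; rewrite /vadd /vsub; ring.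
exact: norm_add.
Qed.

Lemma norm_eq0 u : norm u = 0 -> u = vzero.
Proof. move=> H; apply: dot_eq0; rewrite -norm_sq H; ring. Qed.

Lemma normZ a u : norm (vscale a u) = Rabs a * norm u.
Proof.
rewrite /norm dotZl dotZr -Rmult_assoc sqrt_mult_alt; last by nra.
by rewrite (_ : a * a = Rsqr a) // sqrt_Rsqr_abs.
Qed.

Lemma normN u : norm (vopp u) = norm u.
Proof. by rewrite /norm dotNl dotNr Ropp_involutive. Qed.

Lemma norm_subC u v : norm (vsub u v) = norm (vsub v u).
Proof.
have -> : vsub u v = vopp (vsub v u) by apply: vext => i; rewrite /vopp /vsub; ring.
exact: normN.
Qed.

Lemma norm_vzero : norm (@vzero n) = 0.
Proof. by rewrite /norm dot0l sqrt_0. Qed.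

End Vec.

Lemma dot_subC {n} (u v : vec n) : dot (vsub u v) (vsub u v) = dot (vsub v u) (vsub v u).
Proof. by rewrite -!norm_sq norm_subC. Qed.

Lemma norm_sub_le {n} (u v : vec n) : norm (vsub u v) <= norm u + norm v.
Proof.
have := norm_sub_tri u vzero v.
have -> : vsub u vzero = u by apply: vext => i; rewrite /vsub /vzero; ring.
have -> : vsub vzero v = vopp v by apply: vext => i; rewrite /vsub /vzero /vopp; ring.
by rewrite normN.
Qed.

Lemma norm_lt_of_sq {n} (u : vec n) e : 0 < e -> dot u u < e * e -> norm u < e.
Proof. move=> He H; rewrite -norm_sq in H; have := norm_ge0 u; nra. Qed.

Lemma norm_le_of_sq {n} (u : vec n) B : 0 <= B -> dot u u <= B -> norm u <= 1 + B.
Proof. move=> He H; rewrite -norm_sq in H; have := norm_ge0 u; nra. Qed.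

Lemma bounded_shift {n} (s : nat -> vec n) B : (forall t, norm (s (S t)) <= B) -> seq_bounded s.
Proof.
move=> H; exists (Rmax (norm (s 0%nat)) B) => [[|t]]; first exact: Rmax_l.
apply: Rle_trans (H t) _; exact: Rmax_r.
Qed.

Lemma proj_ineq {n} (w zz u : vec n) : dot (vsub w zz) (vsub w zz) <= dot (vsub w u) (vsub w u) ->
  dot (vsub w zz) (vsub u zz) <= 1/2 * dot (vsub u zz) (vsub u zz).
Proof.
have E : vsub w u = vsub (vsub w zz) (vsub u zz) by apply: vext => i; rewrite /vsub; ring.
rewrite E. move: (vsub w zz) (vsub u zz) => a d. rewrite dotBl !dotBr (dotC d a). lra.
Qed.

Lemma phi_ge (phi : nat -> nat) : (forall k, (phi k < phi (S k))%nat) -> forall k, (k <= phi k)%nat.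
Proof. move=> H; elim=> [|k IH] //; exact: leq_ltn_trans IH (H k). Qed.

Section Mat.
Context {m n : nat}.
Implicit Types (A : mat m n).

Lemma mvD A u v : mv A (vadd u v) = vadd (mv A u) (mv A v).
Proof. apply: vext => i; rewrite /mv /vadd -sumR_add; apply: sumR_ext => j; ring. Qed.
Lemma mvZ A a u : mv A (vscale a u) = vscale a (mv A u).
Proof. apply: vext => i; rewrite /mv /vscale sumR_scale; apply: sumR_ext => j; ring. Qed.
Lemma mvN A u : mv A (vopp u) = vopp (mv A u).
Proof. have -> : vopp u = vscale (-1) u by apply: vext => i; rewrite /vopp /vscale; ring.
 rewrite mvZ; apply: vext => i; rewrite /vopp /vscale; ring. Qed.
Lemma mvB A u v : mv A (vsub u v) = vsub (mv A u) (mv A v).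
Proof. have -> : vsub u v = vadd u (vopp v) by apply: vext => i; rewrite /vopp /vadd /vsub; ring.
 rewrite mvD mvN; apply: vext => i; rewrite /vopp /vadd /vsub; ring. Qed.
Lemma mv0 A : mv A vzero = vzero.
Proof. apply: vext => i; rewrite /mv /vzero big1 // => j _; ring. Qed.

Lemma dot_mv_tr A (u : vec n) (v : vec m) : dot (mv A u) v = dot u (mv (tr A) v).
Proof.
rewrite /dot /mv /tr.
transitivity (\big[Rplus/0]_(i < m) \big[Rplus/0]_(j < n) (A i j * u j * v i)).
  apply: sumR_ext => i; rewrite Rmult_comm sumR_scale; apply: sumR_ext => j; ring.
rewrite sumR_exch; apply: sumR_ext => j; rewrite sumR_scale; apply: sumR_ext => i; ring.
Qed.

Lemma mv_madd A B u : mv (madd A B) u = vadd (mv A u) (mv B u).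
Proof. apply: vext => i; rewrite /mv /vadd /madd -sumR_add; apply: sumR_ext => j; ring. Qed.
Lemma mv_mscale a A u : mv (mscale a A) u = vscale a (mv A u).
Proof. apply: vext => i; rewrite /mv /vscale /mscale sumR_scale; apply: sumR_ext => j; ring. Qed.

Lemma mv_bound A : exists C, 0 <= C /\ forall u, dot (mv A u) (mv A u) <= C * dot u u.
Proof.
exists (\big[Rplus/0]_(i < m) dot (A i) (A i)); split.
  by apply: sumR_ge0 => i; apply: dot_ge0.
move=> u. rewrite {1}/dot Rmult_comm sumR_scale.
elim/big_rec2: _ => [|i x y _ Hxy]; first lra.
have : mv A u i = dot (A i) u by [].
move=> ->. have := CS (A i) u. lra.
Qed.
End Mat.

Lemma mv_mm {m n p} (B : mat m n) (A : mat n p) u : mv (mm B A) u = mv B (mv A u).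
Proof.
apply: vext => i; rewrite /mv /mm.
transitivity (\big[Rplus/0]_(k < p) \big[Rplus/0]_(j < n) (B i j * A j k * u k)).
  apply: sumR_ext => k; rewrite Rmult_comm sumR_scale; apply: sumR_ext => j; ring.
rewrite sumR_exch; apply: sumR_ext => j; rewrite sumR_scale; apply: sumR_ext => k; ring.
Qed.

Lemma mv_idm {n} (u : vec n) : mv idm u = u.
Proof.
apply: vext => i; rewrite /mv /idm (bigD1 i) //= eqxx big1; first ring.
by move=> j /negPf; rewrite eq_sym => ->; ring.
Qed.
Module Bridge.
Import all_algebra Rstruct.
Set Implicit Arguments. Unset Strict Implicit.
Local Open Scope ring_scope.


Lemma inj_bound n (N : mat n n) : (forall v, mv N v = vzero -> v = vzero) ->
  exists C, Rlt 0 C /\ forall v, Rle (dot v v) (Rmult C (dot (mv N v) (mv N v))).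
Proof.
move=> Hinj.
pose Nm : 'M[R]_n := \matrix_(i, j) N j i.
have rowE : forall v : vec n, (\row_i v i) *m Nm = \row_i (mv N v i).
  move=> v; apply/rowP => k; rewrite !mxE; apply: eq_bigr => i _; rewrite !mxE; exact: Rmult_comm.
have Hdet : \det Nm != 0.
  apply/negP => /det0P [w wn0 Hw].
  pose v : vec n := fun i => w ord0 i.
  have Hv : mv N v = vzero.
    apply: vext => k; have := congr1 (fun M : 'M[R]_(1,n) => M ord0 k) Hw.
    rewrite !mxE /= => H; rewrite /vzero; change (IZR Z0) with (GRing.zero : R); rewrite -H /mv. apply: eq_bigr => i _; rewrite !mxE; exact: Rmult_comm.
  move: (Hinj v Hv) => Hv0; move/negP: wn0; apply; apply/eqP/rowP => i.
  rewrite !mxE. exact: (congr1 (fun f => f i) Hv0).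
have Hu : Nm \in unitmx by rewrite unitmxE GRing.unitfE.
pose B := invmx Nm.
pose Bt : mat n n := fun k i => B i k.
have [C [HC HCb]] := mv_bound Bt.
exists (Rplus C 1); split; first lra.
move=> v.
have Hv : v = mv Bt (mv N v).
  apply: vext => k.
  have := congr1 (fun M : 'M[R]_(1,n) => M ord0 k) (mulmxK Hu (\row_i v i)).
  rewrite -/B rowE !mxE => <-. apply: eq_bigr => i _; rewrite !mxE; exact: Rmult_comm.
have := HCb (mv N v); rewrite -Hv. have := dot_ge0 (mv N v). nra.
Qed.

End Bridge.
Import Bridge.
Set Implicit Arguments. Unset Strict Implicit.

Lemma quad_bound n (N : mat n n) : exists C, 0 < C /\ forall u, dot (mv N u) u <= C * dot u u.
Proof.
have [C0 [HC0 HCb]] := mv_bound N.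
exists (1 + C0); split; first lra.
move=> u. have h1 := CS (mv N u) u. have h2 := HCb u. have h3 := dot_ge0 u.
set r := dot (mv N u) u in h1 *. set q := dot u u in h1 h2 h3 *.
have h4 : r * r <= C0 * (q * q) by nra.
destruct (Rle_dec r ((1 + C0) * q)) as [|Hn]; first done.
have : (1 + C0) * q * ((1+C0) * q) < r * r by apply: Rmult_le_0_lt_compat; nra.
nra.
Qed.

Lemma sym_dot n (N : mat n n) : (forall i j, N i j = N j i) ->
  forall v w, dot (mv N w) v = dot (mv N v) w.
Proof.
move=> Hs v w; rewrite dot_mv_tr dotC.
have -> : tr N = N by apply: functional_extensionality => i; apply: functional_extensionality => j; rewrite /tr Hs.
done.
Qed.

Lemma psd_cs n (N : mat n n) : (forall i j, N i j = N j i) -> (forall w, 0 <= dot (mv N w) w) ->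
  forall v w, dot (mv N v) w * dot (mv N v) w <= dot (mv N v) v * dot (mv N w) w.
Proof.
move=> Hs Hp v w; rewrite (Rmult_comm (dot (mv N v) v)).
apply: discr; first exact: Hp.
move=> t; have := Hp (vadd v (vscale t w)).
rewrite mvD mvZ !dotDl !dotDr !dotZl !dotZr (sym_dot Hs v w). lra.
Qed.

Lemma unit_scale n (v : vec n) : v <> vzero ->
  0 < dot v v /\ dot (vscale (/ sqrt (dot v v)) v) (vscale (/ sqrt (dot v v)) v) = 1.
Proof.
move=> Hv. have Hq : 0 < dot v v.
  destruct (Rle_lt_or_eq_dec _ _ (dot_ge0 v)) as [|H]; first done.
  by case: Hv; apply: dot_eq0.
split; first done.
rewrite dotZl dotZr -Rmult_assoc -Rinv_mult sqrt_sqrt; last lra.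
field; lra.
Qed.

Lemma spec_bound n (M : mat n n) lam : (forall i j, M i j = M j i) -> is_lambda_max M lam ->
  forall v, dot (mv M v) v <= lam * dot v v.
Proof.
move=> Hsym [[v0 [Hv0 Hev]] Hmax].
have [C0 [HC0 HCb]] := quad_bound M.
pose E r := exists v, dot v v = 1 /\ r = dot (mv M v) v.
have Ebd : bound E.
  exists C0 => r [v [Hv ->]]. have := HCb v. rewrite Hv. lra.
have Ene : exists r, E r.
  have [_ Hu] := unit_scale Hv0. by eexists; exists (vscale (/ sqrt (dot v0 v0)) v0); split; [exact Hu|].
have [s [Hub Hlub]] := completeness E Ebd Ene.
have Hs : forall v, dot (mv M v) v <= s * dot v v.
  move=> v. destruct (classic (v = vzero)) as [->|Hv].
    rewrite mv0 !dot0l; lra.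
  have [Hq Hu] := unit_scale Hv.
  have := Hub _ (ex_intro _ _ (conj Hu erefl)).
  rewrite mvZ dotZl dotZr -Rmult_assoc -Rinv_mult sqrt_sqrt; last lra.
  move=> H. have : dot (mv M v) v = dot v v * (/ dot v v * dot (mv M v) v) by field; lra.
  move=> ->. rewrite (Rmult_comm s). apply: Rmult_le_compat_l; lra.
have Heig : exists v, v <> vzero /\ mv M v = vscale s v.
  apply: NNPP => Hno.
  pose N : mat n n := madd (mscale s idm) (mscale (-1) M).
  have NE : forall v, mv N v = vsub (vscale s v) (mv M v).
    move=> v; rewrite /N mv_madd !mv_mscale mv_idm; apply: vext => i; rewrite /vadd /vsub /vscale; ring.
  have Ninj : forall v, mv N v = vzero -> v = vzero.
    move=> v Hv; apply: NNPP => Hv'; apply: Hno; exists v; split => //.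
    apply: vext => i; have := congr1 (fun f => f i) Hv; rewrite NE /vsub /vscale /vzero => /= H; lra.
  have [C1 [HC1 HC1b]] := inj_bound Ninj.
  have [C2 [HC2 HC2b]] := quad_bound N.
  have Nsym : forall i j, N i j = N j i.
    move=> i j; rewrite /N /madd /mscale /idm (eq_sym i j) Hsym //.
  have Npsd : forall w, 0 <= dot (mv N w) w.
    move=> w; rewrite NE dotBl dotZl; have := Hs w; lra.
  have Hgap : forall v, dot v v = 1 -> dot (mv M v) v <= s - / (C1 * C2).
    move=> v Hv.
    have hcs := psd_cs Nsym Npsd v (mv N v).
    have hb := HC2b (mv N v).
    have hp := Npsd v. have ha := dot_ge0 (mv N v).
    have h1 := HC1b v. rewrite Hv in h1.
    have hNv : dot (mv N v) v = s - dot (mv M v) v by rewrite NE dotBl dotZl Hv; ring.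
    set a := dot (mv N v) (mv N v) in hcs hb ha h1.
    set p := dot (mv N v) v in hcs hp hNv.
    have h2 : a * a <= p * (C2 * a) by nra.
    have h3 : a <= p * C2.
      destruct (Rle_dec a (p * C2)) as [|Hn]; first done. nra.
    have h4 : 1 <= C1 * C2 * p by nra.
    have h5 : / (C1 * C2) <= p.
      apply: (Rmult_le_reg_l (C1 * C2)); first nra.
      rewrite Rinv_r; nra.
    lra.
  have : s <= s - / (C1 * C2).
    apply: Hlub => r [v [Hv ->]]; exact: Hgap.
  have : 0 < / (C1 * C2) by apply: Rinv_0_lt_compat; nra.
  lra.
have Hsl : s <= lam by apply: Hmax; exact: Heig.
move=> v; have := Hs v; have := dot_ge0 v; nra.
Qed.

Lemma norm_tri_pt {n} (y x : vec n) : norm y <= norm (vsub y x) + norm x.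
Proof.
have E : y = vadd (vsub y x) x by apply: vext => i; rewrite /vadd /vsub; ring.
rewrite {1}E; exact: norm_add.
Qed.

Lemma list_max_nat (l : list nat) : exists K, forall k, In k l -> (k <= K)%nat.
Proof.
elim: l => [|a l [K HK]]; first by exists 0%nat.
exists (maxn a K) => k /= [<-|Hk]; first exact: leq_maxl.
apply: leq_trans (HK k Hk) _; exact: leq_maxr.
Qed.

Lemma compact_bounded {n} (D : vec n -> Prop) : compact_set D -> exists Rb, 0 <= Rb /\ forall z, D z -> norm z <= Rb.
Proof.
move=> Hc.
have Ho : forall k : nat, Defs.open_set (fun v : vec n => norm v < INR k).
  move=> k x Hx; exists (INR k - norm x); split; first lra.
  move=> y Hy; have := norm_tri_pt y x; lra.
have Hcov : forall x, D x -> exists k : nat, norm x < INR k.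
  move=> x _. have Hp : 0 < / (norm x + 1) by apply: Rinv_0_lt_compat; have := norm_ge0 x; lra.
  have [N [HN HN0]] := archimed_cor1 _ Hp.
  exists N. have Hx := norm_ge0 x.
  have Hlt : 0 < INR N by apply: lt_0_INR.
  have : norm x + 1 < INR N.
    rewrite -(Rinv_inv (norm x + 1)) -(Rinv_inv (INR N)).
    apply: Rinv_lt_contravar => //. apply: Rmult_lt_0_compat => //; apply: Rinv_0_lt_compat; lra.
  lra.
have [l Hl] := Hc nat (fun k (v : vec n) => norm v < INR k) Ho Hcov.
have [K HK] := list_max_nat l.
exists (INR K); split; first exact: pos_INR.
move=> z Hz; have [k [Hk Hzk]] := Hl z Hz.
have := HK k Hk => /leP /le_INR; lra.
Qed.

Lemma compact_closed {n} (D : vec n -> Prop) (s : nat -> vec n) zb :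
  compact_set D -> (forall k, D (s k)) -> seq_conv s zb -> D zb.
Proof.
move=> Hc Hs Hcv. apply: NNPP => Hnd.
have Ho : forall k : nat, Defs.open_set (fun v : vec n => / INR (S k) < norm (vsub v zb)).
  move=> k x Hx; exists (norm (vsub x zb) - / INR (S k)); split; first lra.
  move=> y Hy; have := norm_sub_tri x y zb; rewrite (norm_subC x y); lra.
have Hcov : forall x, D x -> exists k : nat, / INR (S k) < norm (vsub x zb).
  move=> x Dx. have Hne : 0 < norm (vsub x zb).
    destruct (Rle_lt_or_eq_dec _ _ (norm_ge0 (vsub x zb))) as [|H]; first done.
    exfalso; apply: Hnd. have := norm_eq0 _ (esym H) => E.
    have -> : zb = x; last done.
    apply: vext => i; have := congr1 (fun f => f i) E; rewrite /vsub /vzero /= => H'; lra.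
  have [N [HN HN0]] := archimed_cor1 _ Hne.
  exists N. apply: Rle_lt_trans HN. apply: Rinv_le_contravar.
    apply: lt_0_INR; exact: HN0.
  rewrite S_INR; lra.
have [l Hl] := Hc nat _ Ho Hcov.
have [K HK] := list_max_nat l.
have Hp : 0 < / INR (S K) by apply: Rinv_0_lt_compat; apply: lt_0_INR; lia.
have [N HN] := Hcv _ Hp.
have := HN N (leqnn N).
have [k [Hk Hsk]] := Hl (s N) (Hs N).
have : / INR (S K) <= / INR (S k).
  apply: Rinv_le_contravar; first by apply: lt_0_INR; lia.
  apply: le_INR. have := HK k Hk => /leP; lia.
lra.
Qed.

Ltac expand := repeat progress (rewrite ?mvB ?mvD ?mvZ ?mvN ?dotBl ?dotBr ?dotDl ?dotDr ?dotZl ?dotZr ?dotNl ?dotNr).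

Section Main.
Context (m n : nat) (A : mat m n) (b : vec m) (lambda : R)
  (Hlam : is_lambda_max (mm (tr A) A) lambda) (Hlampos : 0 < lambda)
  (gamma : R) (Hg0 : 0 < gamma) (Hg1 : gamma < 1 / (12 * lambda)).

Local Notation M := (mm (tr A) A).
Local Notation c := (mv (tr A) b).
Local Notation al := (5 * gamma * lambda).

Definition grad (v : vec n) := vsub (mv M v) c.
Definition Kop (v : vec n) := vadd (vscale al v) (vscale gamma (mv M v)).
Definition qf (v : vec n) := 1/2 * dot (mv M v) v - dot c v.
Definition Phi (Y Z : vec n) := gamma * qf Z +
  1/2 * ((1 - al) * dot (vsub Z Y) (vsub Z Y) - gamma * dot (mv M (vsub Z Y)) (vsub Z Y)).
Definition be := gamma / (1 - al).

Lemma gl_pos : 0 < gamma * lambda /\ 12 * (gamma * lambda) < 1.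
Proof.
split; first nra.
have H : gamma * (12 * lambda) < 1 / (12 * lambda) * (12 * lambda) by apply: Rmult_lt_compat_r; lra.
rewrite /Rdiv Rmult_1_l Rinv_l in H; lra.
Qed.

Lemma Msym : forall i j, M i j = M j i.
Proof. move=> i j; rewrite /mm /tr; apply: sumR_ext => k; ring. Qed.

Lemma Mpsd v : 0 <= dot (mv M v) v.
Proof. rewrite mv_mm dot_mv_tr. exact: dot_ge0. Qed.

Lemma Mspec v : dot (mv M v) v <= lambda * dot v v.
Proof. exact: spec_bound Msym Hlam v. Qed.

Lemma MsymD v w : dot (mv M w) v = dot (mv M v) w.
Proof. exact: (sym_dot Msym v w). Qed.

Lemma Mspec2 v : dot (mv M v) (mv M v) <= lambda * dot (mv M v) v.
Proof.
set u := mv M v.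
have E1 : dot u u = dot (mv A v) (mv A u) by rewrite /u mv_mm dot_mv_tr.
have E2 : dot (mv A v) (mv A v) = dot (mv M v) v by rewrite mv_mm [RHS]dot_mv_tr.
have E3 : dot (mv A u) (mv A u) = dot (mv M u) u by rewrite mv_mm [RHS]dot_mv_tr.
have hcs := CS (mv A v) (mv A u).
have h4 := Mspec u. have h5 := Mpsd v. have h6 := dot_ge0 u.
rewrite -E1 E2 E3 in hcs.
set a := dot u u in hcs h4 h6 *. set p := dot (mv M v) v in hcs h5 *.
have h7 : a * a <= p * (lambda * a) by nra.
destruct (Rle_dec a (lambda * p)) as [|Hn]; first done.
have : 0 < a * (a - lambda * p) by apply: Rmult_lt_0_compat; nra.
nra.
Qed.

Lemma Mnorm v : norm (mv M v) <= lambda * norm v.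
Proof.
have -> : lambda * norm v = norm (vscale lambda v) by rewrite normZ Rabs_pos_eq; lra.
apply: norm_le_sq. rewrite dotZl dotZr. have := Mspec2 v. have := Mspec v. have := Mpsd v. nra.
Qed.

Lemma Phi_proj Y Z Z' : Phi Y Z - Phi Y Z' =
  1/2 * (1 - al) * (dot (vsub Z (vsub Y (vscale be (grad Y)))) (vsub Z (vsub Y (vscale be (grad Y))))
                  - dot (vsub Z' (vsub Y (vscale be (grad Y)))) (vsub Z' (vsub Y (vscale be (grad Y))))).
Proof.
have [h1 h2] := gl_pos.
rewrite /Phi /qf /grad /be. expand.
rewrite !(MsymD Y Z) !(MsymD Y Z') !(dotC Z Y) !(dotC Z' Y) !(dotC Z (mv M Y)) !(dotC Z' (mv M Y)) !(dotC Z c) !(dotC Z' c).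
field. lra.
Qed.


Lemma Phi_lb Y Z : gamma * qf Z + 1/4 * dot (vsub Z Y) (vsub Z Y) <= Phi Y Z.
Proof.
have [h1 h2] := gl_pos. rewrite /Phi.
have := Mspec (vsub Z Y). have := Mpsd (vsub Z Y). have := dot_ge0 (vsub Z Y).
set d := dot (vsub Z Y) (vsub Z Y). set p := dot (mv M (vsub Z Y)) (vsub Z Y).
move=> hd hp hs.
have : gamma * p <= gamma * lambda * d by have := Rmult_le_compat_l gamma _ _ (Rlt_le _ _ Hg0) hs; lra.
nra.
Qed.

Lemma Kexp Y Y' Z : vadd (vsub Y' Y) (Kop (vsub Y' Y)) = vscale 2 (vsub Z Y) ->
  let dl := vsub Y' Y in
  vsub Z Y = vadd (vscale (1/2 * (1 + al)) dl) (vscale (1/2 * gamma) (mv M dl)) /\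
  vsub Z Y' = vadd (vscale (1/2 * (al - 1)) dl) (vscale (1/2 * gamma) (mv M dl)).
Proof.
move=> H dl; split; apply: vext => i; have := congr1 (fun f => f i) H;
rewrite /dl /Kop /vadd /vsub /vscale /= => Hi; lra.
Qed.

Lemma Phi_desc Y Y' Z : vadd (vsub Y' Y) (Kop (vsub Y' Y)) = vscale 2 (vsub Z Y) ->
  Phi Y' Z <= Phi Y Z - al * (1 - al) / 2 * dot (vsub Y' Y) (vsub Y' Y).
Proof.
move=> H; have [E1 E2] := Kexp H.
set dl := vsub Y' Y in E1 E2 *. clearbody dl.
have [h1 h2] := gl_pos.
have E : Phi Y Z - Phi Y' Z = 1/2 * ((al - al * al) * dot dl dl + gamma * (1 - 2 * al) * dot (mv M dl) dl
   - gamma * gamma * dot (mv M dl) (mv M dl)).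
  rewrite /Phi E1 E2. expand.
  rewrite ?(dotC dl (mv M dl)) ?(dotC dl (mv M (mv M dl))) ?(MsymD dl (mv M dl)) ?(dotC (mv M dl) (mv M (mv M dl))).
  field.
have := Mspec2 dl. have := Mpsd dl. have := dot_ge0 dl.
set p0 := dot dl dl in E *. set p1 := dot (mv M dl) dl in E *. set p2 := dot (mv M dl) (mv M dl) in E *.
move=> hp0 hp1 hp2.
have : gamma * gamma * p2 <= gamma * gamma * lambda * p1.
  have := Rmult_le_compat_l (gamma * gamma) _ _ (Rlt_le _ _ (Rmult_lt_0_compat _ _ Hg0 Hg0)) hp2. lra.
have : 0 <= gamma * p1 * (1 - 11 * (gamma * lambda)).
  apply: Rmult_le_pos; [apply: Rmult_le_pos|]; lra.
nra.
Qed.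

Lemma dist_desc Y Y' Z : vadd (vsub Y' Y) (Kop (vsub Y' Y)) = vscale 2 (vsub Z Y) ->
  dot (vsub Z Y) (vsub Z Y) <= dot (vsub Y' Y) (vsub Y' Y).
Proof.
move=> H; have [E1 _] := Kexp H.
set dl := vsub Y' Y in E1 *. clearbody dl.
have [h1 h2] := gl_pos.
rewrite E1. expand. rewrite ?(dotC dl (mv M dl)).
have := Mspec2 dl. have := Mpsd dl. have := dot_ge0 dl. have := Mspec dl.
set p0 := dot dl dl. set p1 := dot (mv M dl) dl. set p2 := dot (mv M dl) (mv M dl).
move=> hs hp0 hp1 hp2.
match goal with |- ?L <= _ => have E : L = 1/4*((1+al)*(1+al))*p0 + 1/2*(1+al)*(gamma*p1) + 1/4*(gamma*gamma*p2) by field end.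
rewrite E.
have hq : gamma * p1 <= gamma * lambda * p0.
  have := Rmult_le_compat_l gamma _ _ (Rlt_le _ _ Hg0) hs. lra.
have hr : gamma * gamma * p2 <= gamma * lambda * (gamma * p1).
  have := Rmult_le_compat_l (gamma * gamma) _ _ (Rlt_le _ _ (Rmult_lt_0_compat _ _ Hg0 Hg0)) hp2.
  have -> : gamma * lambda * (gamma * p1) = gamma * gamma * (lambda * p1) by field. done.
have hq0 : 0 <= gamma * p1 by apply: Rmult_le_pos; lra.
have -> : 5 * gamma * lambda = 5 * (gamma * lambda) by field.
move: hq hr hq0 h1 h2. set g := gamma * lambda. set q := gamma * p1. set r := gamma * gamma * p2.
move=> hq hr hq0 h1 h2.
have h3 : r <= g * (g * p0) by have := Rmult_le_compat_l g _ _ (Rlt_le _ _ h1) hq; lra.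
have h4 : (1 + 5 * g) * q <= (1 + 5 * g) * (g * p0) by apply: Rmult_le_compat_l; lra.
have h5 : 0 <= 1 - 1/4*((1+5*g)*(1+5*g)) - 1/2*(1+5*g)*g - 1/4*(g*g) by nra.
have h6 : 0 <= p0 * (1 - 1/4*((1+5*g)*(1+5*g)) - 1/2*(1+5*g)*g - 1/4*(g*g)) by apply: Rmult_le_pos.
nra.
Qed.


Context (D : vec n -> Prop) (HDne : exists d, D d) (HDc : compact_set D)
  (y z x : nat -> vec n)
  (Hy : forall t,
     mv (madd (mscale (5 * gamma * lambda + 1) idm) (mscale gamma (mm (tr A) A)))
        (y (S t))
     = vadd (x t) (vscale gamma (mv (tr A) b)))
  (Hz : forall t,
     proj_set D (vscale (1 / (1 - 5 * lambda * gamma))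
                        (vsub (vscale 2 (y (S t))) (x t)))
                (z (S t)))
  (Hx : forall t, x (S t) = vadd (x t) (vscale 2 (vsub (z (S t)) (y (S t))))).

Lemma Yrel t : x t = vsub (vadd (vscale (1 + al) (y (S t))) (vscale gamma (mv M (y (S t))))) (vscale gamma c).
Proof.
have := Hy t. rewrite mv_madd !mv_mscale mv_idm => H.
apply: vext => i; have := congr1 (fun f => f i) H; rewrite /vadd /vsub /vscale /= => Hi. lra.
Qed.

Lemma Wrel t : proj_set D (vsub (y (S t)) (vscale be (grad (y (S t))))) (z (S t)).
Proof.
have := Hz t.
have -> : vscale (1 / (1 - 5 * lambda * gamma)) (vsub (vscale 2 (y (S t))) (x t))
   = vsub (y (S t)) (vscale be (grad (y (S t)))); last done.
have [h1 h2] := gl_pos.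
rewrite Yrel /grad /be; apply: vext => i; rewrite /vadd /vsub /vscale. field. lra.
Qed.

Lemma Krel t : vadd (vsub (y (S (S t))) (y (S t))) (Kop (vsub (y (S (S t))) (y (S t))))
  = vscale 2 (vsub (z (S t)) (y (S t))).
Proof.
have H1 := Yrel t. have H2 := Yrel (S t). have H3 := Hx t.
rewrite /Kop mvB; apply: vext => i.
have := congr1 (fun f => f i) H1; have := congr1 (fun f => f i) H2; have := congr1 (fun f => f i) H3.
rewrite /vadd /vsub /vscale /= => h3 h2 h1. lra.
Qed.

Definition Ph t := Phi (y (S t)) (z (S t)).
Local Notation cc := (al * (1 - al) / 2).

Lemma cc_pos : 0 < cc.
Proof. have [h1 h2] := gl_pos. apply: Rmult_lt_0_compat; last lra. apply: Rmult_lt_0_compat; lra. Qed.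

Lemma Ph_desc t : Ph (S t) <= Ph t - cc * dot (vsub (y (S (S t))) (y (S t))) (vsub (y (S (S t))) (y (S t))).
Proof.
have [h1 h2] := gl_pos.
rewrite /Ph.
have HP := Phi_proj (y (S (S t))) (z (S t)) (z (S (S t))).
have [Dz _] := Wrel t. have [_ Hmin] := Wrel (S t).
have Hle := sq_le_norm _ _ (Hmin _ Dz).
rewrite (dot_subC (z (S t))) (dot_subC (z (S (S t)))) in HP.
move: HP Hle; set W := vsub _ (vscale be _).
set d1 := dot (vsub W (z (S t))) _. set d2 := dot (vsub W (z (S (S t)))) _.
move=> HP Hle.
have Hc : 0 <= 1/2 * (1 - al) by lra.
have Hp : 0 <= 1/2 * (1 - al) * (d1 - d2) by apply: Rmult_le_pos; lra.
have := Phi_desc (Krel t).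
lra.
Qed.

Lemma Ph_dist t : dot (vsub (z (S t)) (y (S t))) (vsub (z (S t)) (y (S t))) * cc <= Ph t - Ph (S t).
Proof.
have := dist_desc (Krel t). have := Ph_desc t. have := cc_pos. nra.
Qed.

Lemma D_bounded : exists Rd, 0 <= Rd /\ forall z, D z -> norm z <= Rd.
Proof. exact: compact_bounded. Qed.

Lemma qf_lb Rd Z : (forall z, D z -> norm z <= Rd) -> D Z -> - (norm c * Rd) <= qf Z.
Proof.
move=> HR DZ; rewrite /qf. have := Mpsd Z. have := CS_le c Z. have := HR _ DZ.
have := norm_ge0 c. nra.
Qed.

Lemma Ph_lb Rd t : (forall z, D z -> norm z <= Rd) ->
  gamma * (- (norm c * Rd)) + 1/4 * dot (vsub (z (S t)) (y (S t))) (vsub (z (S t)) (y (S t))) <= Ph t.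
Proof.
move=> HR. have [Dz _] := Wrel t. have := qf_lb HR Dz. have := Phi_lb (y (S t)) (z (S t)).
rewrite /Ph. nra.
Qed.

Lemma Ph_le0 t : Ph t <= Ph 0.
Proof.
elim: t => [|t IH]; first lra.
have := Ph_desc t. have := cc_pos. have := dot_ge0 (vsub (y (S (S t))) (y (S t))). nra.
Qed.

Lemma Hreg : forall eps, 0 < eps -> exists N, forall t, (N <= t)%nat -> norm (vsub (z t) (y t)) < eps.
Proof.
have [Rd [HRd HR]] := D_bounded.
have Hdec : Un_decreasing Ph by move=> t; have := Ph_desc t; have := cc_pos;
  have := dot_ge0 (vsub (y (S (S t))) (y (S t))); nra.
have Hlb : has_lb Ph.
  exists (- (gamma * (- (norm c * Rd)))) => r [i ->]. rewrite /opp_seq.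
  have := Ph_lb i HR. have := dot_ge0 (vsub (z (S i)) (y (S i))). lra.
have [l Hl] := decreasing_cv _ Hdec Hlb.
move=> eps He.
have Hcc := cc_pos.
have He' : 0 < cc * (eps * eps) / 4 by apply: Rmult_lt_0_compat; [apply: Rmult_lt_0_compat; nra|lra].
have [N HN] := Hl _ He'.
exists (S N) => [[|t]] // Ht.
have h1 := HN t ltac:(apply/leP; exact: Ht).
have h2 := HN (S t) ltac:(apply/leP; apply: leqW; exact: Ht).
rewrite /R_dist in h1 h2.
have := Rabs_def2 _ _ h1. have := Rabs_def2 _ _ h2.
have := Ph_dist t.
move=> h3 h4 h5.
apply: norm_lt_of_sq => //.
set q := dot _ _ in h3 *.
have : q * cc < cc * (eps * eps) by lra.
nra.
Qed.


Lemma Dz_pos t : (1 <= t)%nat -> D (z t).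
Proof. case: t => // t _. by have [Dz _] := Wrel t. Qed.

Lemma bounded_all : seq_bounded y /\ seq_bounded z /\ seq_bounded x.
Proof.
have [h1 h2] := gl_pos.
have [Rd [HRd HR]] := D_bounded.
have Hz0 : forall t, norm (z (S t)) <= Rd by move=> t; apply: HR; exact: Dz_pos.
have Hc0 := norm_ge0 c.
set B2 := 4 * (Ph 0 + gamma * (norm c * Rd)).
have HB2 : 0 <= B2.
  have := Ph_lb 0 HR. have := dot_ge0 (vsub (z 1%nat) (y 1%nat)). rewrite /B2. nra.
have Hy0 : forall t, norm (y (S t)) <= 1 + B2 + Rd.
  move=> t.
  have Hd : dot (vsub (z (S t)) (y (S t))) (vsub (z (S t)) (y (S t))) <= B2.
    have := Ph_lb t HR. have := Ph_le0 t. rewrite /B2. lra.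
  have := norm_le_of_sq _ _ HB2 Hd. have := norm_tri_pt (y (S t)) (z (S t)).
  rewrite (norm_subC (y (S t))). have := Hz0 t. lra.
split; first exact: bounded_shift Hy0.
split; first exact: bounded_shift Hz0.
exists ((1 + al) * (1 + B2 + Rd) + gamma * (lambda * (1 + B2 + Rd)) + gamma * norm c) => t.
rewrite Yrel.
apply: Rle_trans (norm_sub_le _ _) _.
have := norm_add (vscale (1 + al) (y (S t))) (vscale gamma (mv M (y (S t)))).
rewrite !normZ !Rabs_pos_eq; try lra.
have := Mnorm (y (S t)). have := Hy0 t. have := norm_ge0 (y (S t)).
move=> a1 a2 a3 a4.
have : gamma * norm (mv M (y (S t))) <= gamma * (lambda * (1 + B2 + Rd)).
  apply: Rmult_le_compat_l; first lra. have := Rmult_le_compat_l lambda _ _ (Rlt_le _ _ Hlampos) a2. lra.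
have : (1 + al) * norm (y (S t)) <= (1 + al) * (1 + B2 + Rd) by apply: Rmult_le_compat_l; lra.
lra.
Qed.

Lemma Hfre t0 : frechet_subgrad (indicator D) (z (S t0))
  (vsub (vscale (/ be) (vsub (y (S t0)) (z (S t0)))) (grad (y (S t0)))).
Proof.
have [h1 h2] := gl_pos.
have Hbe : 0 < be by rewrite /be; apply: Rdiv_lt_0_compat; lra.
have [Dz Hmin] := Wrel t0.
set Y := y (S t0) in Dz Hmin *. set Z := z (S t0) in Dz Hmin *.
set W := vsub Y (vscale be (grad Y)) in Hmin.
have Ev : vsub (vscale (/ be) (vsub Y Z)) (grad Y) = vscale (/ be) (vsub W Z).
  apply: vext => i; rewrite /W /vsub /vscale. field. lra.
rewrite Ev.
exists 0; split.
  by rewrite /indicator; case: excluded_middle_informative.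
move=> eps He; exists (2 * be * eps); split; first nra.
move=> z' [Hp Hl]. rewrite /indicator; case: excluded_middle_informative => // Dz'.
have Hpi := proj_ineq _ _ _ (sq_le_norm _ _ (Hmin _ Dz')).
rewrite dotZl.
rewrite -norm_sq in Hpi.
set nr := norm (vsub z' Z) in Hp Hl Hpi *.
set q := dot (vsub W Z) (vsub z' Z) in Hpi *.
have : / be * q <= / be * (1/2 * (nr * nr)) by apply: Rmult_le_compat_l; [apply: Rlt_le; apply: Rinv_0_lt_compat|].
have : / be * (1/2 * (nr * nr)) < eps * nr.
  have -> : / be * (1/2 * (nr * nr)) = nr * (/ be * nr / 2) by field; lra.
  rewrite (Rmult_comm eps). apply: Rmult_lt_compat_l => //.
  apply: (Rmult_lt_reg_l be) => //. have -> : be * (/ be * nr / 2) = nr / 2 by field; lra. nra.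
simpl. lra.
Qed.

Lemma cluster yb zb xb : cluster_point3 y z x yb zb xb ->
  yb = zb /\ limiting_subgrad (indicator D) zb (vopp (mv (tr A) (vsub (mv A zb) b))).
Proof.
move=> [phi [Hinc [Hcy [Hcz Hcx]]]].
have Hge := phi_ge _ Hinc.
have [h1 h2] := gl_pos.
have Hbe : 0 < be by rewrite /be; apply: Rdiv_lt_0_compat; lra.
have Hyz : yb = zb.
  have Hn : forall eps, 0 < eps -> norm (vsub yb zb) < eps.
    move=> eps He.
    have He3 : 0 < eps / 3 by lra.
    have [N1 H1] := Hcy _ He3. have [N2 H2] := Hcz _ He3. have [N3 H3] := Hreg He3.
    set k := maxn N1 (maxn N2 N3).
    have k1 : (N1 <= k)%nat by rewrite /k leq_maxl.
    have k2 : (N2 <= k)%nat by rewrite /k (leq_trans _ (leq_maxr _ _)) // leq_maxl.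
    have k3 : (N3 <= phi k)%nat.
      apply: leq_trans (Hge k). by rewrite /k (leq_trans _ (leq_maxr _ _)) // leq_maxr.
    have a1 := H1 k k1. have a2 := H2 k k2. have a3 := H3 _ k3.
    have := norm_sub_tri yb (y (phi k)) zb. have := norm_sub_tri (y (phi k)) (z (phi k)) zb.
    rewrite (norm_subC yb (y (phi k))) (norm_subC (y (phi k)) (z (phi k))). lra.
  have H0 : norm (vsub yb zb) = 0.
    have := norm_ge0 (vsub yb zb). destruct (Rle_lt_or_eq_dec _ _ (norm_ge0 (vsub yb zb))) as [Hp|]; last by [].
    have := Hn _ Hp. lra.
  have := norm_eq0 _ H0 => E. apply: vext => i; have := congr1 (fun f => f i) E; rewrite /vsub /vzero /= => Ei; lra.
split => //.
subst yb.
have Hphi1 : forall k, (1 <= phi (S k))%nat by move=> k; apply: leq_trans (Hge (S k)).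
have Hzs : seq_conv (fun k => z (phi (S k))) zb.
  move=> eps He; have [N HN] := Hcz _ He; exists N => k Hk; apply: HN; exact: leqW.
have Dzb : D zb.
  apply: (compact_closed (s := fun k => z (phi (S k)))) => // k. exact: Dz_pos.
exists (fun k => z (phi (S k))),
  (fun k => vsub (vscale (/ be) (vsub (y (phi (S k))) (z (phi (S k))))) (grad (y (phi (S k))))).
split; first exact: Hzs.
split.
  exists 0; split; first by rewrite /indicator; case: excluded_middle_informative.
  move=> eps He; exists 0%nat => k _; exists 0; split; last by rewrite Rminus_0_r Rabs_R0.
  by rewrite /indicator; case: excluded_middle_informative => // H; case: H; exact: Dz_pos.
split.
  have Et : vopp (mv (tr A) (vsub (mv A zb) b)) = vopp (grad zb) by rewrite /grad mvB mv_mm.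
  rewrite Et.
  move=> eps He.
  have He1 : 0 < eps * be / 2 by apply: Rmult_lt_0_compat; [apply: Rmult_lt_0_compat|]; lra.
  have He2 : 0 < eps / (2 * lambda) by apply: Rdiv_lt_0_compat; lra.
  have [N1 H1] := Hcy _ He2. have [N3 H3] := Hreg He1.
  exists (maxn N1 N3) => k Hk.
  have k1 : (N1 <= S k)%nat by apply: leq_trans (leqnSn _); apply: leq_trans Hk; exact: leq_maxl.
  have k3 : (N3 <= phi (S k))%nat.
    apply: leq_trans (Hge _). apply: leq_trans (leqnSn _); apply: leq_trans Hk; exact: leq_maxr.
  have a1 := H1 _ k1. have a3 := H3 _ k3.
  set Y := y (phi (S k)) in a1 a3 *. set Z := z (phi (S k)) in a3 *.
  have Ev : vsub (vsub (vscale (/ be) (vsub Y Z)) (grad Y)) (vopp (grad zb))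
      = vsub (vscale (/ be) (vsub Y Z)) (mv M (vsub Y zb)).
    rewrite mvB; apply: vext => i; rewrite /grad /vsub /vscale /vopp; lra.
  rewrite Ev.
  apply: Rle_lt_trans (norm_sub_le _ _) _.
  rewrite normZ Rabs_pos_eq; last by apply: Rlt_le; apply: Rinv_0_lt_compat.
  rewrite (norm_subC Y).
  have := Mnorm (vsub Y zb).
  have : / be * norm (vsub Z Y) < / be * (eps * be / 2).
    apply: Rmult_lt_compat_l => //; exact: Rinv_0_lt_compat.
  have -> : / be * (eps * be / 2) = eps / 2 by field; lra.
  have : lambda * norm (vsub Y zb) < lambda * (eps / (2 * lambda)) by apply: Rmult_lt_compat_l.
  have -> : lambda * (eps / (2 * lambda)) = eps / 2 by field; lra.
  lra.
move=> k.
have := Hphi1 k. case E: (phi (S k)) => [|t0] // _.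
exact: Hfre.
Qed.

End Main.

Theorem mainTheorem12 (m n : nat) (A : mat m n) (b : vec m) (lambda : R)
  (Hlam : is_lambda_max (mm (tr A) A) lambda) (Hlampos : 0 < lambda)
  (D : vec n -> Prop) (HDne : exists d, D d) (HDc : compact_set D)
  (gamma : R) (Hg0 : 0 < gamma) (Hg1 : gamma < 1 / (12 * lambda))
  (y z x : nat -> vec n)
  (Hy : forall t,
     mv (madd (mscale (5 * gamma * lambda + 1) idm) (mscale gamma (mm (tr A) A)))
        (y (S t))
     = vadd (x t) (vscale gamma (mv (tr A) b)))
  (Hz : forall t,
     proj_set D (vscale (1 / (1 - 5 * lambda * gamma))
                        (vsub (vscale 2 (y (S t))) (x t)))
                (z (S t)))
  (Hx : forall t, x (S t) = vadd (x t) (vscale 2 (vsub (z (S t)) (y (S t))))) :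
  (seq_bounded y /\ seq_bounded z /\ seq_bounded x) /\
  forall yb zb xb, cluster_point3 y z x yb zb xb ->
    yb = zb /\
    limiting_subgrad (indicator D) zb (vopp (mv (tr A) (vsub (mv A zb) b))).
Proof.
split.
- exact: (bounded_all Hlam Hlampos Hg0 Hg1 HDc Hy Hz Hx).
- move=> yb zb xb Hc. exact: (cluster Hlam Hlampos Hg0 Hg1 HDc Hy Hz Hx Hc).
Qed.
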